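(* Let $V$ be a finite dimensional normed vector space and $H\le O(V)$. Let $L_i:H\to\mathbb{R}$ be group-norms such that $d_i(u,v)=\inf_{a\in H}\sqrt{L_i(a)^2+\|au-v\|^2}$ converge uniformly on compact sets to a semi-metric $d_\infty$ on $V$. Then $$G=\{g\in O(V):\ d_\infty(u,gu)=0 \text{ for all } u\in V\}$$ is a closed subgroup of $O(V)$, and for $u,v\in V$, $d_\infty(u,v)=0$ if and only if $v=gu$ for some $g\in G$.
   Context: $O(V)$ is the group of norm-preserving linear maps of $V$. A group-norm on $H$ is $L:H\to\mathbb{R}$ with $L(a)\ge0$, $L(a)=0$ iff $a=e$, $L(a^{-1})=L(a)$, $L(ab)\le L(a)+L(b)$. $G$ is called the wane group. *)

(* Defs.v *)
From Stdlib Require Fin.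
From Stdlib Require Import Reals List.
Open Scope R_scope.

(* V is modelled as R^n = (Fin.t n -> R) equipped with an arbitrary norm N.
   Every n-dimensional real normed space is isometric to such an (R^n, N). *)
Definition vec (n : nat) := Fin.t n -> R.

Definition vadd {n} (u v : vec n) : vec n := fun i => u i + v i.
Definition vopp {n} (u : vec n) : vec n := fun i => - u i.
Definition vsub {n} (u v : vec n) : vec n := fun i => u i - v i.
Definition vscale {n} (c : R) (u : vec n) : vec n := fun i => c * u i.
Definition vzero {n} : vec n := fun _ => 0.

Definition is_norm {n} (N : vec n -> R) : Prop :=
  (forall u, 0 <= N u) /\
  (forall u, N u = 0 -> u = vzero) /\
  (forall c u, N (vscale c u) = Rabs c * N u) /\
  (forall u v, N (vadd u v) <= N u + N v).

Definition is_linear {n} (f : vec n -> vec n) : Prop :=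
  (forall u v, f (vadd u v) = vadd (f u) (f v)) /\
  (forall c u, f (vscale c u) = vscale c (f u)).

Definition in_O {n} (N : vec n -> R) (f : vec n -> vec n) : Prop :=
  is_linear f /\ forall u, N (f u) = N u.

Definition id_map {n} (f : vec n -> vec n) : Prop := forall u, f u = u.

Definition inverse_maps {n} (g h : vec n -> vec n) : Prop :=
  (forall u, g (h u) = u) /\ (forall u, h (g u) = u).

Definition is_subgroup_O {n} (N : vec n -> R) (H : (vec n -> vec n) -> Prop) : Prop :=
  (forall a, H a -> in_O N a) /\
  H (fun u => u) /\
  (forall a b, H a -> H b -> H (fun u => a (b u))) /\
  (forall a, H a -> exists b, H b /\ inverse_maps a b).

Definition is_group_norm {n} (H : (vec n -> vec n) -> Prop)
    (L : (vec n -> vec n) -> R) : Prop :=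
  (forall a, H a -> 0 <= L a) /\
  (forall a, H a -> (L a = 0 <-> id_map a)) /\
  (forall a b, H a -> H b -> inverse_maps a b -> L b = L a) /\
  (forall a b, H a -> H b -> L (fun u => a (b u)) <= L a + L b).

Definition is_infimum (S : R -> Prop) (m : R) : Prop :=
  (forall x, S x -> m <= x) /\
  (forall m', (forall x, S x -> m' <= x) -> m' <= m).

Definition is_semimetric {n} (d : vec n -> vec n -> R) : Prop :=
  (forall u v, 0 <= d u v) /\
  (forall u, d u u = 0) /\
  (forall u v, d u v = d v u) /\
  (forall u v w, d u w <= d u v + d v w).

Definition open_VV {n} (N : vec n -> R) (U : vec n -> vec n -> Prop) : Prop :=
  forall u v, U u v -> exists r, 0 < r /\
    forall u' v', N (vsub u' u) < r -> N (vsub v' v) < r -> U u' v'.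

Definition compact_VV {n} (N : vec n -> R) (K : vec n -> vec n -> Prop) : Prop :=
  forall (I : Type) (U : I -> vec n -> vec n -> Prop),
    (forall i, open_VV N (U i)) ->
    (forall u v, K u v -> exists i, U i u v) ->
    exists l : list I, forall u v, K u v -> exists i, In i l /\ U i u v.

Definition unif_cv_compact {n} (N : vec n -> R)
    (d : nat -> vec n -> vec n -> R) (dl : vec n -> vec n -> R) : Prop :=
  forall K, compact_VV N K ->
    forall eps, 0 < eps -> exists i0 : nat, forall i, (i0 <= i)%nat ->
      forall u v, K u v -> Rabs (d i u v - dl u v) < eps.

(* Main.v *)
Require Import Defs.
From Stdlib Require Import Reals List.
From Stdlib Require Import Reals Lra Lia List Classical ClassicalEpsilon FunctionalExtensionality.
Open Scope R_scope.

Definition sincr (phi : nat -> nat) := forall m, (phi m < phi (S m))%nat.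

Lemma sincr_mono phi : sincr phi -> forall m k, (m < k)%nat -> (phi m < phi k)%nat.
Proof. intros H m k Hk. induction Hk. apply H. specialize (H m0). lia. Qed.

Lemma sincr_ge phi : sincr phi -> forall m, (m <= phi m)%nat.
Proof. intros H m. induction m. lia. specialize (H m). lia. Qed.

Lemma sincr_comp f g : sincr f -> sincr g -> sincr (fun m => f (g m)).
Proof. intros Hf Hg m. apply sincr_mono; auto. Qed.

Lemma cv_sub u l phi : sincr phi -> Un_cv u l -> Un_cv (fun m => u (phi m)) l.
Proof.
  intros Hp Hu eps He. destruct (Hu eps He) as [N0 HN]. exists N0.
  intros m Hm. apply HN. pose proof (sincr_ge phi Hp m). unfold ge in *. lia.
Qed.

Lemma choice_fun {A B : Type} (P : A -> B -> Prop) :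
  (forall a, exists b, P a b) -> exists f : A -> B, forall a, P a (f a).
Proof.
  intros H. exists (fun a => proj1_sig (constructive_indefinite_description _ (H a))).
  intro a. exact (proj2_sig (constructive_indefinite_description _ (H a))).
Qed.

Lemma BW_R (u : nat -> R) B : (forall m, Rabs (u m) <= B) ->
  exists phi, sincr phi /\ exists l, Un_cv (fun m => u (phi m)) l.
Proof.
  intros Hb.
  set (peak := fun m => forall k, (m < k)%nat -> u k <= u m).
  destruct (classic (forall M, exists m, (M <= m)%nat /\ peak m)) as [Hp|Hp].
  - destruct (choice_fun _ Hp) as [nx Hnx].
    set (phi := fix phi k := match k with O => nx O | S k => nx (S (phi k)) end).
    assert (Hs : sincr phi). { intro m. simpl. destruct (Hnx (S (phi m))). lia. }
    exists phi. split; auto.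
    assert (Hd : Un_decreasing (fun m => u (phi m))).
    { intro m. simpl. destruct (Hnx (phi m)) as [_ Hpk].
      assert (Hpk2: peak (phi m)).
      { destruct m; simpl; apply Hnx. }
      apply Hpk2. destruct (Hnx (S (phi m))). lia. }
    destruct (decreasing_cv _ Hd) as [l Hl].
    + exists B. intros x [i ->]. unfold opp_seq. specialize (Hb (phi i)).
      pose proof (Rle_abs (u (phi i))); pose proof (Rle_abs (- u (phi i))); rewrite Rabs_Ropp in *; lra.
    + exists l; auto.
  - apply not_all_ex_not in Hp. destruct Hp as [N0 HN].
    assert (Hn : forall m, exists k, (m < k)%nat /\ ((N0 <= m)%nat -> u m < u k)).
    { intro m. destruct (Compare_dec.le_lt_dec N0 m) as [Hm|Hm].
      - assert (~ peak m) by (intro; apply HN; exists m; auto).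
        unfold peak in H. apply not_all_ex_not in H. destruct H as [k Hk].
        exists k. apply imply_to_and in Hk. destruct Hk. split; auto. intros; lra.
      - exists (S m). split. lia. intros; lia. }
    destruct (choice_fun _ Hn) as [nx Hnx].
    set (phi := fix phi k := match k with O => N0 | S k => nx (phi k) end).
    assert (Hge : forall m, (N0 <= phi m)%nat).
    { induction m. simpl; lia. simpl. destruct (Hnx (phi m)). lia. }
    assert (Hs : sincr phi). { intro m. simpl. destruct (Hnx (phi m)). lia. }
    exists phi. split; auto.
    assert (Hg : Un_growing (fun m => u (phi m))).
    { intro m. simpl. destruct (Hnx (phi m)) as [_ H2]. left. apply H2, Hge. }
    destruct (growing_cv _ Hg) as [l Hl].
    + exists B. intros x [i ->]. specialize (Hb (phi i)).
      pose proof (Rle_abs (u (phi i))); pose proof (Rle_abs (- u (phi i))); rewrite Rabs_Ropp in *; lra.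
    + exists l; auto.
Qed.

Lemma BW_list {A : Type} (l : list A) (s : A -> nat -> R) :
  (forall a, In a l -> exists B, forall m, Rabs (s a m) <= B) ->
  exists phi, sincr phi /\ forall a, In a l -> exists L, Un_cv (fun m => s a (phi m)) L.
Proof.
  induction l as [|a l IH]; intros Hb.
  - exists (fun m => m). split. intro; lia. intros a [].
  - destruct IH as [phi1 [H1 H1c]]. { intros; apply Hb; simpl; auto. }
    destruct (Hb a (or_introl eq_refl)) as [B HB].
    destruct (BW_R (fun m => s a (phi1 m)) B) as [phi2 [H2 [L2 HL2]]]. { intro; apply HB. }
    exists (fun m => phi1 (phi2 m)). split. apply sincr_comp; auto.
    intros b [<-|Hbl]. exists L2; auto.
    destruct (H1c b Hbl) as [L HL]. exists L.
    apply (cv_sub (fun m => s b (phi1 m)) L phi2 H2 HL).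
Qed.

Fixpoint sumL {A} (l : list A) (f : A -> R) : R :=
  match l with nil => 0 | a :: l => f a + sumL l f end.

Lemma cv_sumL {A} (l : list A) (f : A -> nat -> R) (F : A -> R) :
  (forall a, In a l -> Un_cv (f a) (F a)) ->
  Un_cv (fun m => sumL l (fun a => f a m)) (sumL l F).
Proof.
  induction l; intros H; simpl.
  - intros eps He. exists O. intros. unfold Rdist. rewrite Rminus_diag, Rabs_R0. auto.
  - apply CV_plus. apply H; simpl; auto. apply IHl. intros; apply H; simpl; auto.
Qed.

Lemma cv_abs u l : Un_cv u l -> Un_cv (fun m => Rabs (u m)) (Rabs l).
Proof.
  intros H eps He. destruct (H eps He) as [N0 HN]. exists N0. intros m Hm.
  unfold Rdist in *. eapply Rle_lt_trans. apply Rabs_triang_inv2. apply HN; auto.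
Qed.

Lemma cv_const c : Un_cv (fun _ => c) c.
Proof. intros eps He. exists O. intros. unfold Rdist. rewrite Rminus_diag, Rabs_R0. auto. Qed.

Lemma sumL_nonneg {A} (l : list A) f : (forall a, 0 <= f a) -> 0 <= sumL l f.
Proof. induction l; simpl; intros; [lra|]. pose proof (H a). specialize (IHl H). lra. Qed.

Lemma sumL_le {A} (l : list A) f g : (forall a, f a <= g a) -> sumL l f <= sumL l g.
Proof. induction l; simpl; intros; [lra|]. pose proof (H a). specialize (IHl H). lra. Qed.

Lemma sumL_In {A} (l : list A) f a : (forall a, 0 <= f a) -> In a l -> f a <= sumL l f.
Proof. induction l; simpl; intros Hn Hi; [contradiction|].
  destruct Hi as [<-|Hi]. pose proof (sumL_nonneg l f Hn). lra.
  specialize (IHl Hn Hi). specialize (Hn a0). lra. Qed.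

Lemma sumL_0 {A} (l : list A) : sumL l (fun _ => 0) = 0.
Proof. induction l; simpl; auto. rewrite IHl; ring. Qed.

Lemma sumL_scale {A} (l : list A) c f : c * sumL l f = sumL l (fun a => c * f a).
Proof. induction l; simpl. ring. rewrite <- IHl; ring. Qed.

Lemma sumL_ext {A} (l : list A) f g : (forall a, f a = g a) -> sumL l f = sumL l g.
Proof. intros H; induction l; simpl; auto. rewrite IHl, H; auto. Qed.

Section V.
Context {n : nat} (N : vec n -> R) (HN : is_norm N).

Lemma vext (x y : vec n) : (forall i, x i = y i) -> x = y.
Proof. intros; apply functional_extensionality; auto. Qed.

Lemma N_zero : N vzero = 0.
Proof. destruct HN as [_ [_ [Hs _]]].
  replace (@vzero n) with (vscale 0 (@vzero n)) by (apply vext; intro; unfold vscale, vzero; ring).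
  rewrite Hs, Rabs_R0. ring. Qed.

Lemma N_nonneg x : 0 <= N x. Proof. apply HN. Qed.

Lemma N_sub_sym x y : N (vsub x y) = N (vsub y x).
Proof. destruct HN as [_ [_ [Hs _]]].
  replace (vsub x y) with (vscale (-1) (vsub y x)) by (apply vext; intro; unfold vscale, vsub; ring).
  rewrite Hs. replace (Rabs (-1)) with 1. ring. rewrite Rabs_left; lra. Qed.

Lemma N_tri3 x y z : N (vsub x z) <= N (vsub x y) + N (vsub y z).
Proof. destruct HN as [_ [_ [_ Ht]]].
  replace (vsub x z) with (vadd (vsub x y) (vsub y z)) by (apply vext; intro; unfold vadd, vsub; ring).
  apply Ht. Qed.

Lemma N_diff x y : Rabs (N x - N y) <= N (vsub x y).
Proof. destruct HN as [_ [_ [_ Ht]]].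
  assert (H1 : N x <= N (vsub x y) + N y).
  { replace x with (vadd (vsub x y) y) at 1 by (apply vext; intro; unfold vadd, vsub; ring). apply Ht. }
  assert (H2 : N y <= N (vsub y x) + N x).
  { replace y with (vadd (vsub y x) x) at 1 by (apply vext; intro; unfold vadd, vsub; ring). apply Ht. }
  rewrite N_sub_sym in H2. apply Rabs_le. lra. Qed.

Lemma N_eq0 x y : N (vsub x y) = 0 -> x = y.
Proof. intros H. destruct HN as [_ [Hz _]]. apply Hz in H. apply vext. intro i.
  assert (vsub x y i = vzero i) by (rewrite H; auto). unfold vsub, vzero in H0. lra. Qed.

Definition e (k : Fin.t n) : vec n := fun i => if Fin.eq_dec k i then 1 else 0.

Definition zap (a : Fin.t n) (x : vec n) : vec n := fun i => if Fin.eq_dec a i then 0 else x i.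

Lemma decomp a x : x = vadd (vscale (x a) (e a)) (zap a x).
Proof. apply vext; intro i. unfold vadd, vscale, e, zap. destruct (Fin.eq_dec a i); subst; ring. Qed.

Lemma N_le_sum l x : (forall i, ~ In i l -> x i = 0) ->
  N x <= sumL l (fun k => Rabs (x k) * N (e k)).
Proof.
  revert x. induction l as [|a l IH]; intros x Hx; simpl.
  - replace x with (@vzero n). rewrite N_zero; lra. apply vext; intro i; rewrite Hx; auto.
  - destruct HN as [_ [_ [Hs Ht]]].
    rewrite (decomp a x) at 1. eapply Rle_trans. apply Ht. rewrite Hs.
    apply Rplus_le_compat_l. eapply Rle_trans. apply IH.
    + intros i Hi. unfold zap. destruct (Fin.eq_dec a i). auto. apply Hx. simpl. tauto.
    + apply sumL_le. intro k. apply Rmult_le_compat_r. apply N_nonneg.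
      unfold zap. destruct (Fin.eq_dec a k). rewrite Rabs_R0; apply Rabs_pos. lra.
Qed.
End V.

Fixpoint enum (n : nat) : list (Fin.t n) :=
  match n with O => nil | S n => Fin.F1 :: map Fin.FS (enum n) end.

Lemma enum_In n (i : Fin.t n) : In i (enum n).
Proof. induction i; simpl. auto. right. apply in_map. auto. Qed.

Section V2.
Context {n : nat} (N : vec n -> R) (HN : is_norm N).

Lemma N_le_T x : N x <= sumL (enum n) (fun k => Rabs (x k) * N (e k)).
Proof. apply N_le_sum; auto. intros i Hi; exfalso; apply Hi, enum_In. Qed.

Lemma coord_cv_N (x : nat -> vec n) (y : vec n) :
  (forall k, Un_cv (fun m => x m k) (y k)) -> Un_cv (fun m => N (vsub (x m) y)) 0.
Proof.
  intros Hc.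
  assert (Hs : Un_cv (fun m => sumL (enum n) (fun k => Rabs (x m k - y k) * N (e k)))
                     (sumL (enum n) (fun k => 0))).
  { apply (cv_sumL _ (fun k m => Rabs (x m k - y k) * N (e k)) (fun _ => 0)).
    intros k _. replace 0 with (Rabs (y k - y k) * N (e k)) by (rewrite Rminus_diag, Rabs_R0; ring).
    apply CV_mult; [|apply cv_const]. apply cv_abs. apply CV_minus; auto. apply cv_const. }
  rewrite sumL_0 in Hs.
  intros eps He. destruct (Hs eps He) as [M HM]. exists M. intros m Hm.
  specialize (HM m Hm). unfold Rdist in *. rewrite Rminus_0_r in *.
  pose proof (N_le_T (vsub (x m) y)) as H1. pose proof (N_nonneg N HN (vsub (x m) y)) as H2.
  assert (H3 : 0 <= sumL (enum n) (fun k => Rabs (x m k - y k) * N (e k))).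
  { apply sumL_nonneg. intros; apply Rmult_le_pos; [apply Rabs_pos|apply N_nonneg; auto]. }
  rewrite Rabs_pos_eq in HM by exact H3. rewrite Rabs_pos_eq by exact H2.
  unfold vsub in H1 at 2. lra.
Qed.
End V2.

Section V3.
Context {n : nat} (N : vec n -> R) (HN : is_norm N).

Definition S1 (x : vec n) := sumL (enum n) (fun k => Rabs (x k)).

Lemma lower_bound : exists c, 0 < c /\ forall x, c * S1 x <= N x.
Proof.
  apply NNPP. intro Hno.
  assert (Hm : forall m : nat, exists y : vec n, S1 y = 1 /\ N y < / INR (S m)).
  { intro m. apply NNPP. intro Hy. apply Hno. exists (/ INR (S m)). split.
    apply Rinv_0_lt_compat, lt_0_INR; lia.
    intro x. apply Rnot_lt_le. intro Hx.
    assert (HS : 0 < S1 x).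
    { pose proof (N_nonneg N HN x). pose proof (sumL_nonneg (enum n) (fun k => Rabs (x k)) (fun k => Rabs_pos _)).
      fold (S1 x) in H0. destruct H0; auto. rewrite <- H0 in Hx. lra. }
    apply Hy. exists (vscale (/ S1 x) x). split.
    - unfold S1 at 1, vscale. transitivity (/ S1 x * S1 x). 2: field; lra.
      assert (Hc : 0 < / S1 x) by (apply Rinv_0_lt_compat; auto).
      set (c := / S1 x) in *. unfold S1. rewrite sumL_scale. apply sumL_ext. intro k.
      rewrite Rabs_mult, (Rabs_pos_eq c). ring. lra.
    - destruct HN as [_ [_ [Hs _]]]. rewrite Hs, Rabs_pos_eq.
      2: left; apply Rinv_0_lt_compat; auto.
      apply Rmult_lt_reg_l with (S1 x); auto. rewrite <- Rmult_assoc, Rinv_r, Rmult_1_l; lra. }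
  destruct (choice_fun _ Hm) as [y Hy].
  destruct (BW_list (enum n) (fun k m => y m k)) as [phi [Hphi Hcv]].
  { intros k _. exists 1. intro m. destruct (Hy m) as [H1 _]. rewrite <- H1.
    apply (sumL_In (enum n) (fun k => Rabs (y m k))). intro; apply Rabs_pos. apply enum_In. }
  set (z := fun k => epsilon (inhabits 0) (fun L => Un_cv (fun m => y (phi m) k) L)).
  assert (Hz : forall k, Un_cv (fun m => y (phi m) k) (z k)).
  { intro k. unfold z. apply epsilon_spec. apply Hcv, enum_In. }
  assert (HS : S1 z = 1).
  { apply (UL_sequence (fun m => S1 (y (phi m)))).
    apply (cv_sumL _ (fun k m => Rabs (y (phi m) k))). intros; apply cv_abs, Hz.
    intros eps He. exists O. intros. rewrite (proj1 (Hy _)). unfold Rdist. rewrite Rminus_diag, Rabs_R0; auto. }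
  assert (HNz : N z = 0).
  { apply Rle_antisym; [|apply N_nonneg; auto].
    apply Rnot_lt_le. intro Hpos.
    destruct (coord_cv_N N HN (fun m => y (phi m)) z Hz (N z / 2)) as [M1 HM1]. lra.
    destruct (archimed_cor1 (N z / 2)) as [M2 [HM2 HM2']]. lra.
    set (m := max M1 M2). specialize (HM1 m ltac:(unfold m; lia)). unfold Rdist in HM1.
    rewrite Rminus_0_r, Rabs_pos_eq in HM1 by (apply N_nonneg; auto).
    pose proof (N_tri3 N HN z (y (phi m)) vzero).
    assert (Hv : forall x : vec n, vsub x vzero = x) by (intro; apply vext; intro; unfold vsub, vzero; ring).
    rewrite !Hv in H. rewrite N_sub_sym in H by auto.
    destruct (Hy (phi m)) as [_ Hlt].
    assert (/ INR (S (phi m)) <= / INR M2).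
    { apply Rinv_le_contravar. apply lt_0_INR; lia. apply le_INR.
      pose proof (sincr_ge phi Hphi m). unfold m in *. lia. }
    lra. }
  destruct HN as [_ [Hz0 _]]. apply Hz0 in HNz. rewrite HNz in HS.
  unfold S1, vzero in HS. rewrite Rabs_R0, sumL_0 in HS. lra.
Qed.
End V3.

Lemma cv_ext u v l : (forall m, u m = v m) -> Un_cv u l -> Un_cv v l.
Proof. intros He H eps Hp. destruct (H eps Hp) as [M HM]. exists M. intros m Hm. rewrite <- He. auto. Qed.

Lemma lin_zero {n} (a : vec n -> vec n) : is_linear a -> a vzero = vzero.
Proof. intros [_ Hs]. replace (@vzero n) with (vscale 0 (@vzero n)) by (apply vext; intro; unfold vscale, vzero; ring).
  rewrite Hs. apply vext; intro; unfold vscale; ring. Qed.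

Section V4.
Context {n : nat} (N : vec n -> R) (HN : is_norm N).

Lemma O_compact (a : nat -> vec n -> vec n) : (forall m, in_O N (a m)) ->
  exists phi g, sincr phi /\ in_O N g /\
    forall w, Un_cv (fun m => N (vsub (a (phi m) w) (g w))) 0.
Proof.
  intros Ha.
  destruct (lower_bound N HN) as [c [Hc Hlb]].
  destruct (BW_list (list_prod (enum n) (enum n)) (fun jk m => a m (e (fst jk)) (snd jk)))
    as [phi [Hphi Hcv]].
  { intros [j k] _. exists (N (e j) / c). intro m. simpl.
    apply Rmult_le_reg_l with c; auto. unfold Rdiv. rewrite <- (proj2 (Ha m) (e j)).
    field_simplify; [|lra]. eapply Rle_trans. 2: apply Hlb. apply Rmult_le_compat_l. lra.
    apply (sumL_In _ (fun k => Rabs (a m (e j) k))). intro; apply Rabs_pos. apply enum_In. }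
  assert (Hcw : forall l w, (forall i, ~ In i l -> w i = 0) -> forall k,
            exists L, Un_cv (fun m => a (phi m) w k) L).
  { induction l as [|j l IH]; intros w Hw k.
    - replace w with (@vzero n) by (apply vext; intro i; rewrite Hw; auto).
      exists 0. apply (cv_ext (fun _ => 0)). intro m. rewrite lin_zero by apply Ha. reflexivity.
      apply cv_const.
    - destruct (IH (zap j w)) with k as [L1 HL1].
      { intros i Hi. unfold zap. destruct (Fin.eq_dec j i); auto. apply Hw. simpl; tauto. }
      destruct (Hcv (j, k)) as [L2 HL2]. apply in_prod; apply enum_In.
      exists (w j * L2 + L1).
      apply (cv_ext (fun m => w j * a (phi m) (e j) k + a (phi m) (zap j w) k)).
      + intro m. rewrite (decomp j w) at 3. destruct (Ha (phi m)) as [[Hadd Hsc] _].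
        rewrite Hadd, Hsc. unfold vadd, vscale. reflexivity.
      + apply CV_plus; auto. apply CV_mult. apply cv_const. exact HL2. }
  assert (Hcw' : forall w k, exists L, Un_cv (fun m => a (phi m) w k) L).
  { intros w. apply (Hcw (enum n)). intros i Hi; exfalso; apply Hi, enum_In. }
  set (g := fun w k => epsilon (inhabits 0) (fun L => Un_cv (fun m => a (phi m) w k) L)).
  assert (Hg : forall w k, Un_cv (fun m => a (phi m) w k) (g w k)).
  { intros w k. apply epsilon_spec, Hcw'. }
  assert (HgN : forall w, Un_cv (fun m => N (vsub (a (phi m) w) (g w))) 0).
  { intro w. apply coord_cv_N; auto. }
  exists phi, g. split; auto. split; auto. split; [split|].
  - intros u v. apply vext; intro k. apply (UL_sequence (fun m => a (phi m) (vadd u v) k)). apply Hg.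
    apply (cv_ext (fun m => a (phi m) u k + a (phi m) v k)).
    + intro m. destruct (Ha (phi m)) as [[Hadd _] _]. rewrite Hadd. reflexivity.
    + apply CV_plus; apply Hg.
  - intros s u. apply vext; intro k. apply (UL_sequence (fun m => a (phi m) (vscale s u) k)). apply Hg.
    apply (cv_ext (fun m => s * a (phi m) u k)).
    + intro m. destruct (Ha (phi m)) as [[_ Hsc] _]. rewrite Hsc. reflexivity.
    + apply CV_mult. apply cv_const. apply Hg.
  - intro w. apply (UL_sequence (fun m => N (a (phi m) w))).
    + intros eps He. destruct (HgN w eps He) as [M HM]. exists M. intros m Hm.
      specialize (HM m Hm). unfold Rdist in *. rewrite Rminus_0_r, Rabs_pos_eq in HM by (apply N_nonneg; auto).
      eapply Rle_lt_trans. apply N_diff; auto. auto.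
    + apply (cv_ext (fun _ => N w)). intro m. symmetry; apply (Ha (phi m)). apply cv_const.
Qed.
End V4.

Lemma le_eps x : 0 <= x -> (forall eps, 0 < eps -> x < eps) -> x = 0.
Proof. intros H0 H. apply Rle_antisym; auto. apply Rnot_lt_le. intro Hp.
  specialize (H (x/2) ltac:(lra)). lra. Qed.

Section V5.
Context {n : nat} (N : vec n -> R) (HN : is_norm N).

Lemma in_O_id : in_O N (fun u => u).
Proof. split; [split|]; auto. Qed.

Lemma in_O_comp f g : in_O N f -> in_O N g -> in_O N (fun u => f (g u)).
Proof. intros [[Af Sf] Nf] [[Ag Sg] Ng]. split; [split|].
  - intros; rewrite Ag, Af; auto. - intros; rewrite Sg, Sf; auto.
  - intros; rewrite Nf, Ng; auto. Qed.

Lemma O_sub f x y : in_O N f -> f (vsub x y) = vsub (f x) (f y).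
Proof. intros [[Af Sf] _].
  replace (vsub x y) with (vadd x (vscale (-1) y)) by (apply vext; intro; unfold vsub, vadd, vscale; ring).
  rewrite Af, Sf. apply vext; intro; unfold vsub, vadd, vscale; ring. Qed.

Lemma O_Nsub f x y : in_O N f -> N (vsub (f x) (f y)) = N (vsub x y).
Proof. intros Hf. rewrite <- O_sub by auto. apply Hf. Qed.

Lemma small_N x : (forall eps, 0 < eps -> N x < eps) -> x = vzero.
Proof. intro H. apply HN. apply le_eps. apply N_nonneg; auto. auto. Qed.

Lemma cv0_N (u : nat -> R) : (forall m, 0 <= u m) -> Un_cv u 0 ->
  forall eps, 0 < eps -> exists M, forall m, (M <= m)%nat -> u m < eps.
Proof. intros Hn H eps He. destruct (H eps He) as [M HM]. exists M. intros m Hm.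
  specialize (HM m Hm). unfold Rdist in HM. rewrite Rminus_0_r, Rabs_pos_eq in HM; auto. Qed.

Lemma O_inverse g : in_O N g -> exists h, in_O N h /\ inverse_maps g h.
Proof.
  intros Hg.
  set (pw := fun k => Nat.iter k g).
  assert (Hpw : forall k, in_O N (pw k)).
  { induction k. apply in_O_id. apply (in_O_comp g (pw k)); auto. }
  destruct (O_compact N HN pw Hpw) as [phi [G0 [Hphi [HG0 Hc]]]].
  set (km := fun m => (phi (S m) - phi m)%nat).
  assert (Hkm : forall m, km m = S (km m - 1)).
  { intro m. unfold km. specialize (Hphi m). lia. }
  assert (Hclaim : forall w eps, 0 < eps -> exists M, forall m, (M <= m)%nat ->
            N (vsub (pw (km m) w) w) < eps).
  { intros w eps He.
    destruct (cv0_N _ (fun m => N_nonneg N HN _) (Hc w) (eps/2)) as [M HM]. lra.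
    exists M. intros m Hm.
    assert (Heq : pw (phi (S m)) w = pw (phi m) (pw (km m) w)).
    { unfold pw. rewrite <- Nat.iter_add. f_equal. unfold km. specialize (Hphi m). lia. }
    rewrite <- (O_Nsub (pw (phi m))) by auto. rewrite <- Heq.
    eapply Rle_lt_trans. apply (N_tri3 N HN _ (G0 w)).
    rewrite (N_sub_sym N HN (G0 w)).
    pose proof (HM (S m) ltac:(lia)). pose proof (HM m Hm). simpl in *. lra. }
  set (hs := fun m => pw (km m - 1)%nat).
  destruct (O_compact N HN hs (fun m => Hpw _)) as [psi [h [Hpsi [Hh Hhc]]]].
  assert (Hgh : forall w, g (h w) = w).
  { intro w. apply N_eq0 with N; auto. apply le_eps. apply N_nonneg; auto. intros eps He.
    destruct (cv0_N _ (fun m => N_nonneg N HN _) (Hhc w) (eps/2)) as [M1 HM1]. lra.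
    destruct (Hclaim w (eps/2)) as [M2 HM2]. lra.
    set (m := max M1 M2).
    eapply Rle_lt_trans. apply (N_tri3 N HN _ (g (hs (psi m) w))).
    rewrite O_Nsub by auto. rewrite N_sub_sym by auto.
    assert (g (hs (psi m) w) = pw (km (psi m)) w).
    { unfold hs. rewrite (Hkm (psi m)) at 2. reflexivity. }
    rewrite H.
    pose proof (HM1 m ltac:(unfold m; lia)).
    pose proof (HM2 (psi m) ltac:(pose proof (sincr_ge psi Hpsi m); unfold m in *; lia)).
    lra. }
  exists h. split; auto. split; auto.
  intro u. apply N_eq0 with N; auto. rewrite <- (O_Nsub g) by auto. rewrite Hgh.
  unfold vsub. replace (fun i => g u i - g u i) with (@vzero n) by (apply vext; intro; unfold vzero; ring).
  apply N_zero; auto.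
Qed.
End V5.

Lemma sqrt_sum_le x y : 0 <= x -> 0 <= y -> sqrt (x ^ 2 + y ^ 2) <= x + y.
Proof. intros. rewrite <- (sqrt_pow2 (x + y)) by lra. apply sqrt_le_1_alt. nra. Qed.

Lemma sqrt_ge_l x y : 0 <= x -> x <= sqrt (x ^ 2 + y ^ 2).
Proof. intros. rewrite <- (sqrt_pow2 x) at 1 by lra. apply sqrt_le_1_alt. nra. Qed.

Lemma sqrt_ge_r x y : 0 <= y -> y <= sqrt (x ^ 2 + y ^ 2).
Proof. intros. rewrite <- (sqrt_pow2 y) at 1 by lra. apply sqrt_le_1_alt. nra. Qed.

Theorem mainTheorem14 (n : nat) (N : vec n -> R)
  (H : (vec n -> vec n) -> Prop)
  (L : nat -> (vec n -> vec n) -> R)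
  (d : nat -> vec n -> vec n -> R)
  (dinf : vec n -> vec n -> R) :
  is_norm N ->
  is_subgroup_O N H ->
  (forall i, is_group_norm H (L i)) ->
  (forall i u v, is_infimum
      (fun r => exists a, H a /\ r = sqrt (L i a ^ 2 + N (vsub (a u) v) ^ 2))
      (d i u v)) ->
  unif_cv_compact N d dinf ->
  is_semimetric dinf ->
  let G := fun g => in_O N g /\ forall u, dinf u (g u) = 0 in
  (G (fun u => u) /\
   (forall g h, G g -> G h -> G (fun u => g (h u))) /\
   (forall g, G g -> exists h, G h /\ inverse_maps g h)) /\
  (forall (gs : nat -> vec n -> vec n) (g : vec n -> vec n),
     (forall k, G (gs k)) -> in_O N g ->
     (forall u eps, 0 < eps -> exists k0 : nat, forall k, (k0 <= k)%nat ->
        N (vsub (gs k u) (g u)) < eps) ->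
     G g) /\
  (forall u v, dinf u v = 0 <-> exists g, G g /\ v = g u).
Proof.
  intros HN HH HL Hd Hcv [Dnn [Drefl [Dsym Dtri]]] G.
  assert (Hpt : forall u v eps, 0 < eps -> exists M, forall i, (M <= i)%nat ->
             Rabs (d i u v - dinf u v) < eps).
  { intros u v eps He. destruct (Hcv (fun x y => x = u /\ y = v)) with eps as [M HM]; auto.
    - intros I U HU Hcov. destruct (Hcov u v (conj eq_refl eq_refl)) as [i Hi].
      exists (i :: nil). intros x y [-> ->]. exists i. simpl; auto.
    - exists M. intros i Hi. apply HM; auto. }
  assert (Hdle : forall i u v a, H a -> d i u v <= sqrt (L i a ^ 2 + N (vsub (a u) v) ^ 2)).
  { intros i u v a Ha. apply (proj1 (Hd i u v)). exists a; auto. }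
  destruct HH as [HHO [HHid [HHc HHinv]]].
  assert (Lid : forall i, L i (fun u => u) = 0).
  { intro i. destruct (HL i) as [_ [HL0 _]]. apply HL0; auto. intro; auto. }
  assert (Dle : forall x y, dinf x y <= N (vsub x y)).
  { intros x y. apply Rnot_lt_le. intro Hlt.
    destruct (Hpt x y (dinf x y - N (vsub x y))) as [M HM]. lra.
    specialize (HM M (le_n _)). specialize (Hdle M x y _ HHid). rewrite Lid in Hdle.
    replace (0 ^ 2 + N (vsub x y) ^ 2) with (N (vsub x y) ^ 2) in Hdle by ring.
    rewrite sqrt_pow2 in Hdle by (apply N_nonneg; auto).
    apply Rabs_def2 in HM. lra. }
  assert (G0 : forall x, 0 <= x -> (forall eps, 0 < eps -> x < eps) -> x = 0) by apply le_eps.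
  split; [split; [|split]|split].
  - split. apply in_O_id. auto.
  - intros g h [Og Dg] [Oh Dh]. split. apply in_O_comp; auto.
    intro u. apply Rle_antisym; auto.
    pose proof (Dtri u (h u) (g (h u))). rewrite Dh, Dg in H0. lra.
  - intros g [Og Dg]. destruct (O_inverse N HN g Og) as [h [Oh [Ig1 Ig2]]].
    exists h. split; [split|split]; auto.
    intro u. rewrite <- (Ig1 u) at 1. rewrite Dsym. apply Dg.
  - intros gs g Hgs Og Hc. split; auto. intro u. apply G0; auto. intros eps He.
    destruct (Hc u eps He) as [k0 Hk0]. specialize (Hk0 k0 (le_n _)).
    pose proof (Dtri u (gs k0 u) (g u)). rewrite (proj2 (Hgs k0)) in H0.
    pose proof (Dle (gs k0 u) (g u)). lra.
  - intros u v. split.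
    2:{ intros [g [[_ Dg] ->]]. auto. }
    intro Huv.
    assert (Hex : forall i, exists a, H a /\
               sqrt (L i a ^ 2 + N (vsub (a u) v) ^ 2) < d i u v + / INR (S i)).
    { intro i. apply NNPP. intro Hno.
      assert (Hpos : 0 < / INR (S i)) by (apply Rinv_0_lt_compat, lt_0_INR; lia).
      assert (d i u v + / INR (S i) <= d i u v); [|lra].
      apply (proj2 (Hd i u v)). intros x [a [Ha ->]].
      apply Rnot_lt_le. intro Hlt. apply Hno. exists a; auto. }
    destruct (choice_fun _ Hex) as [a Ha].
    set (r := fun i => sqrt (L i (a i) ^ 2 + N (vsub (a i u) v) ^ 2)).
    assert (Hr : forall eps, 0 < eps -> exists M, forall i, (M <= i)%nat -> r i < eps).
    { intros eps He. destruct (Hpt u v (eps/2)) as [M1 HM1]. lra.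
      destruct (archimed_cor1 (eps/2)) as [M2 [HM2 HM2']]. lra.
      exists (max M1 M2). intros i Hi. specialize (HM1 i ltac:(lia)). rewrite Huv, Rminus_0_r in HM1.
      apply Rabs_def2 in HM1. destruct (Ha i) as [_ Hlt]. unfold r.
      assert (/ INR (S i) <= / INR M2).
      { apply Rinv_le_contravar. apply lt_0_INR; lia. apply le_INR. lia. }
      lra. }
    assert (HaO : forall i, in_O N (a i)) by (intro; apply HHO, Ha).
    destruct (O_compact N HN a HaO) as [phi [g [Hphi [Og Hgc]]]].
    assert (HLnn : forall i, 0 <= L i (a i)) by (intro i; apply (HL i), Ha).
    exists g. split; [split; auto|].
    + intro w. apply G0; auto. intros eps He.
      destruct (Hr (eps/3)) as [M1 HM1]. lra.
      destruct (cv0_N _ (fun m => N_nonneg N HN _) (Hgc w) (eps/3)) as [M2 HM2]. lra.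
      destruct (Hpt w (g w) (eps/3)) as [M3 HM3]. lra.
      set (m := max M1 (max M2 M3)).
      pose proof (sincr_ge phi Hphi m) as Hge.
      specialize (HM1 (phi m) ltac:(unfold m in *; lia)).
      specialize (HM2 m ltac:(unfold m in *; lia)).
      specialize (HM3 (phi m) ltac:(unfold m in *; lia)).
      apply Rabs_def2 in HM3.
      pose proof (Hdle (phi m) w (g w) (a (phi m)) (proj1 (Ha _))).
      pose proof (sqrt_sum_le (L (phi m) (a (phi m))) (N (vsub (a (phi m) w) (g w)))
                    (HLnn _) (N_nonneg N HN _)).
      pose proof (sqrt_ge_l (L (phi m) (a (phi m))) (N (vsub (a (phi m) u) v)) (HLnn _)).
      unfold r in HM1. lra.
    + symmetry. apply N_eq0 with N; auto. apply G0. apply N_nonneg; auto. intros eps He.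
      destruct (Hr (eps/2)) as [M1 HM1]. lra.
      destruct (cv0_N _ (fun m => N_nonneg N HN _) (Hgc u) (eps/2)) as [M2 HM2]. lra.
      set (m := max M1 M2).
      pose proof (sincr_ge phi Hphi m) as Hge.
      specialize (HM1 (phi m) ltac:(unfold m in *; lia)).
      specialize (HM2 m ltac:(unfold m in *; lia)).
      pose proof (N_tri3 N HN (g u) (a (phi m) u) v).
      rewrite (N_sub_sym N HN (g u) (a (phi m) u)) in H0.
      pose proof (sqrt_ge_r (L (phi m) (a (phi m))) (N (vsub (a (phi m) u) v)) (N_nonneg N HN _)).
      unfold r in HM1. lra.
Qed.
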